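(* Let $G$ be a $\lambda$-graph and $Q$ a query over $G$. Then $Q^{\#}$ is a sharing equivalence if and only if there exists a sharing equivalence on the nodes of $G$ containing $Q$.
   Context: A pre-$\lambda$-graph is a directed graph whose nodes are of four kinds: an application node $@(n_1,n_2)$ has exactly two children, its left child $n_1$ and its right child $n_2$; an abstraction node $\lambda(n)$ has exactly one child, its body $n$; a free variable node has no children and carries an atom $\mathrm{id}(n)$ from a fixed set of atoms, distinct free variable nodes carrying distinct atoms; a bound variable node $\mathrm{var}(l)$ has exactly one outgoing binding edge, to an abstraction node $l$ (its binder). A trace is a finite sequence of directions from $\{\swarrow,\downarrow,\searrow\}$; $\epsilon$ is the empty trace and $d\cdot\tau$ is the trace $\tau$ extended by one final step $d$. Paths $n\xrightarrow{\tau}m$ are defined inductively: $n\xrightarrow{\epsilon}n$; if $n\xrightarrow{\tau}\lambda(m)$ then $n\xrightarrow{\downarrow\cdot\tau}m$; if $n\xrightarrow{\tau}@(m_1,m_2)$ then $n\xrightarrow{\swarrow\cdot\tau}m_1$ and $n\xrightarrow{\searrow\cdot\tau}m_2$ (binding edges are never followed). The path $n\xrightarrow{\tau}$ crosses a node $m$ if either $n\xrightarrow{\tau}m$, or $\tau=d\cdot\tau'$ and $n\xrightarrow{\tau'}$ crosses $m$. A root is a node $r$ such that the only path ending in $r$ has the empty trace. A node $m$ dominates $n$ if every path from a root to $n$ crosses $m$. A $\lambda$-graph is a pre-$\lambda$-graph that has finitely many nodes, is acyclic ($n\xrightarrow{\tau}n$ holds only for $\tau=\epsilon$), and is dominated (every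 bound variable node $\mathrm{var}(l)$ is dominated by its binder $l$). Two nodes are homogeneous if both are application nodes, or both abstraction nodes, or both free variable nodes, or both bound variable nodes; a binary relation $R$ on nodes is homogeneous if it only relates homogeneous nodes. Rules: $(\swarrow)$: $@(n_1,n_2)\,R\,@(m_1,m_2)$ implies $n_1\,R\,m_1$; $(\searrow)$: $@(n_1,n_2)\,R\,@(m_1,m_2)$ implies $n_2\,R\,m_2$; $(\downarrow)$: $\lambda(n)\,R\,\lambda(m)$ implies $n\,R\,m$; $(\circlearrowright)$: $\mathrm{var}(n)\,R\,\mathrm{var}(m)$ implies $n\,R\,m$. $R$ is propagated if closed under $(\swarrow),(\downarrow),(\searrow)$. $R$ is open if $n\,R\,m$ implies $n=m$ for all free variable nodes $n,m$. A bisimulation is a homogeneous propagated relation closed also under $(\circlearrowright)$. A sharing equivalence is an open bisimulation that is an equivalence relation. $R^{\#}$ (spreading) is the smallest propagated equivalence relation containing $R$. A query over $G$ is a binary relation on the roots of $G$. *)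

(* Defs.v *)
From mathcomp Require Import all_boot.
Set Implicit Arguments.
Unset Strict Implicit.
Unset Printing Implicit Defensive.

Inductive node (V A : Type) : Type :=
| App  of V & V
| Abs  of V
| FVar of A
| BVar of V.         (* var(l), binding edge to l *)

Arguments App {V A} _ _.
Arguments Abs {V A} _.
Arguments FVar {V A} _.
Arguments BVar {V A} _.

Definition graph (V A : Type) := V -> node V A.

Section Graphs.
Variables (V : finType) (A : Type) (G : graph V A).

Definition pre_lambda_graph : Prop :=
  (forall n l, G n = BVar l -> exists b, G l = Abs b) /\
  (forall n m a b, G n = FVar a -> G m = FVar b -> a = b -> n = m).

Inductive dir : Type := DL | DD | DR .

(* A trace d·τ (τ extended by a final step d) is represented as d :: τ. *)
Definition trace := list dir.

Inductive path (n : V) : trace -> V -> Prop :=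
| path_nil : path n nil n
| path_abs : forall tau m b, path n tau m -> G m = Abs b -> path n (DD :: tau) b
| path_appl : forall tau m m1 m2, path n tau m -> G m = App m1 m2 ->
    path n (DL :: tau) m1
| path_appr : forall tau m m1 m2, path n tau m -> G m = App m1 m2 ->
    path n (DR :: tau) m2.

Fixpoint crosses (n : V) (tau : trace) (m : V) : Prop :=
  path n tau m \/
  match tau with
  | nil => False
  | _ :: tau' => crosses n tau' m
  end.

Definition root (r : V) : Prop := forall n tau, path n tau r -> tau = nil.

Definition dominates (m n : V) : Prop :=
  forall r tau, root r -> path r tau n -> crosses r tau m.

Definition acyclic : Prop := forall n tau, path n tau n -> tau = nil.

(* Finiteness is built in: V is a finType. *)
Definition lambda_graph : Prop :=
  pre_lambda_graph /\ acyclic /\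
  (forall v l, G v = BVar l -> dominates l v).

Definition homogeneous_nodes (n m : V) : Prop :=
  match G n, G m with
  | App _ _, App _ _ | Abs _, Abs _ | FVar _, FVar _ | BVar _, BVar _ => True
  | _, _ => False
  end.

Definition homogeneous (R : V -> V -> Prop) : Prop :=
  forall n m, R n m -> homogeneous_nodes n m.

Definition propagated (R : V -> V -> Prop) : Prop :=
  (forall n m n1 n2 m1 m2, R n m -> G n = App n1 n2 -> G m = App m1 m2 ->
     R n1 m1) /\
  (forall n m b c, R n m -> G n = Abs b -> G m = Abs c -> R b c) /\
  (forall n m n1 n2 m1 m2, R n m -> G n = App n1 n2 -> G m = App m1 m2 ->
     R n2 m2).

Definition open_rel (R : V -> V -> Prop) : Prop :=
  forall n m a b, G n = FVar a -> G m = FVar b -> R n m -> n = m.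

Definition bisimulation (R : V -> V -> Prop) : Prop :=
  homogeneous R /\ propagated R /\
  (forall n m l k, R n m -> G n = BVar l -> G m = BVar k -> R l k).

Definition equivalence_rel (R : V -> V -> Prop) : Prop :=
  (forall x, R x x) /\ (forall x y, R x y -> R y x) /\
  (forall x y z, R x y -> R y z -> R x z).

Definition sharing_equivalence (R : V -> V -> Prop) : Prop :=
  open_rel R /\ bisimulation R /\ equivalence_rel R.

Definition spread (R : V -> V -> Prop) : V -> V -> Prop :=
  fun x y => forall S : V -> V -> Prop,
    propagated S -> equivalence_rel S -> (forall a b, R a b -> S a b) -> S x y.

Definition query (Q : V -> V -> Prop) : Prop :=
  forall x y, Q x y -> root x /\ root y.

End Graphs.

(* Main.v *)
From Stdlib Require Import Classical.
Require Import Defs.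
From mathcomp Require Import all_boot.
Import Defs.

Section Aux.
Context {V : finType} {A : Type} {G : graph V A}.

Lemma path_inv {v d s w} : Defs.path G v (d :: s) w ->
  exists m, Defs.path G v s m /\ match d with
   | DD => G m = Abs w
   | DL => exists m2, G m = App w m2
   | DR => exists m1, G m = App m1 w end.
Proof. intros H; inversion H; subst; eauto. Qed.

Lemma path_cat {v t u s w} : Defs.path G v t u -> Defs.path G u s w ->
  Defs.path G v (s ++ t) w.
Proof.
move=> H1 H2; elim: H2 => [|tau m b _ IH Hm|tau m m1 m2 _ IH Hm|tau m m1 m2 _ IH Hm].
- by [].
- exact: path_abs IH Hm.
- exact: path_appl IH Hm.
- exact: path_appr IH Hm.
Qed.

Lemma path_split {v s t w} : Defs.path G v (s ++ t) w ->
  exists u, Defs.path G v t u /\ Defs.path G u s w.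
Proof.
elim: s w => [|d s IH] w /= H.
- by exists w; split => //; apply: path_nil.
- have [m [H1 H3]] := path_inv H.
  have [u [H1' H2]] := IH _ H1. exists u; split => //.
  case: d H3 {H} => [[m2 H3]|H3|[m1 H3]].
  + exact: path_appl H2 H3.
  + exact: path_abs H2 H3.
  + exact: path_appr H2 H3.
Qed.

Fixpoint follow (v : V) (t : trace) : option V :=
  match t with
  | nil => Some v
  | d :: t' => match follow v t' with
     | None => None
     | Some w => match d, G w with
        | DD, Abs b => Some b
        | DL, App a _ => Some a
        | DR, App _ b => Some b
        | _, _ => None end end end.

Lemma path_follow {v t w} : Defs.path G v t w -> follow v t = Some w.
Proof.
elim => [|tau m b _ IH Hm|tau m m1 m2 _ IH Hm|tau m m1 m2 _ IH Hm] //=;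
  by rewrite IH Hm.
Qed.

Lemma path_det {v t w1} : Defs.path G v t w1 -> forall w2, Defs.path G v t w2 -> w1 = w2.
Proof.
move=> H w2 H2. have := path_follow H. rewrite (path_follow H2). by case.
Qed.

Lemma same_trace {S : V -> V -> Prop} : propagated G S ->
  forall {r r' t a b}, S r r' -> Defs.path G r t a -> Defs.path G r' t b -> S a b.
Proof.
move=> [P1 [P2 P3]] r r' t a b Hrr H; elim: H b =>
  [|tau m c _ IH Hm|tau m m1 m2 _ IH Hm|tau m m1 m2 _ IH Hm] b' H'.
- inversion H'; subst; assumption.
- have [m' [H1 H3]] := path_inv H'. exact: P2 (IH _ H1) Hm H3.
- have [m' [H1 [x H3]]] := path_inv H'. exact: P1 (IH _ H1) Hm H3.
- have [m' [H1 [x H3]]] := path_inv H'. exact: P3 (IH _ H1) Hm H3.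
Qed.

Lemma step_lemma {R : V -> V -> Prop} : homogeneous G R -> propagated G R ->
  forall {a a' t}, Defs.path G a t a' -> forall {b}, R a b ->
  exists b', Defs.path G b t b' /\ R a' b'.
Proof.
move=> Hh [P1 [P2 P3]] a a' t H; elim: H =>
  [|tau m c _ IH Hm|tau m m1 m2 _ IH Hm|tau m m1 m2 _ IH Hm] b Hab.
- by exists b; split => //; apply: path_nil.
- have [b' [Hp Hr]] := IH _ Hab. have := Hh _ _ Hr. rewrite /homogeneous_nodes Hm.
  case E: (G b') => [x y|x|x|x] // _. exists x; split; first exact: path_abs Hp E.
  exact: P2 Hr Hm E.
- have [b' [Hp Hr]] := IH _ Hab. have := Hh _ _ Hr. rewrite /homogeneous_nodes Hm.
  case E: (G b') => [x y|x|x|x] // _. exists x; split; first exact: path_appl Hp E.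
  exact: P1 Hr Hm E.
- have [b' [Hp Hr]] := IH _ Hab. have := Hh _ _ Hr. rewrite /homogeneous_nodes Hm.
  case E: (G b') => [x y|x|x|x] // _. exists y; split; first exact: path_appr Hp E.
  exact: P3 Hr Hm E.
Qed.

Fixpoint pw (e : trace) (i : nat) : trace :=
  match i with 0 => nil | S i => e ++ pw e i end.

Lemma pw_add e a b : pw e (a + b) = pw e a ++ pw e b.
Proof. elim: a => [|a IH] //=. by rewrite IH catA. Qed.

Lemma no_proper_loop {R : V -> V -> Prop} : acyclic G -> homogeneous G R ->
  propagated G R -> forall {z w e}, e <> nil -> Defs.path G z e w -> R z w -> False.
Proof.
move=> Hac Hh Hp z w0 e He Hpath Hzw.
have Hseq : forall i, exists w w', Defs.path G z (pw e i) w /\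
    Defs.path G w e w' /\ R w w'.
  elim => [|i [w [w' [H1 [H2 H3]]]]].
  - by exists z, w0; split => //; apply: path_nil.
  - have [w'' [H4 H5]] := step_lemma Hh Hp H2 H3.
    exists w', w''; split => //=. exact: path_cat H1 H2.
pose f (i : 'I_(#|V|.+1)) := odflt z (follow z (pw e i)).
have Hf : forall i : 'I_(#|V|.+1), Defs.path G z (pw e i) (f i).
  move=> i. have [w [w' [H1 _]]] := Hseq i. by rewrite /f (path_follow H1).
have Hni : ~ injective f.
  move=> Hinj. have := leq_card f Hinj. by rewrite card_ord ltnn.
have [i [j [Eij Nij]]] : exists i j, f i = f j /\ i <> j.
  apply: NNPP => Hn; apply: Hni => i j E. apply: NNPP => N.
  by apply: Hn; exists i, j.
have key : forall i j : 'I_(#|V|.+1), f i = f j -> (i < j)%N -> False.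
  move=> a b E Hlt. have Hb := Hf b.
  have Eb : (b : nat) = (b - a) + a by rewrite subnK // ltnW.
  rewrite Eb pw_add in Hb. have [u [H1 H2]] := path_split Hb.
  have Eu := path_det H1 _ (Hf a). subst u. rewrite E in H2.
  have := Hac _ _ H2. have : (0 < b - a)%N by rewrite subn_gt0.
  case: (b - a)%N => [|c] //= _ Hn. apply: He. have := congr1 size Hn.
  by rewrite size_cat => /eqP; rewrite addn_eq0 => /andP [/eqP/size0nil].
case: (ltngtP i j) => H.
- exact: key Eij H.
- exact: key (esym Eij) H.
- by apply: Nij; apply: val_inj.
Qed.

Lemma crosses_split {r t m} : crosses G r t m ->
  exists t0 t1, t = t0 ++ t1 /\ Defs.path G r t1 m.
Proof.
elim: t => [|d t IH] /= [H|H] //.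
- by exists nil, nil.
- by exists nil, (d :: t).
- have [t0 [t1 [E H']]] := IH H. exists (d :: t0), t1. by rewrite E.
Qed.

Lemma suffix_lem {t0 s0 t1 s1 : trace} : t0 ++ t1 = s0 ++ s1 ->
  (size t1 <= size s1)%N -> exists e, s1 = e ++ t1.
Proof.
elim: s0 t0 => [|a s0 IH] t0 /=.
- by move=> <- _; exists t0.
- case: t0 => [|b t0] /=.
  + move=> E; rewrite E /= size_cat => H. exfalso.
    by move: H; rewrite ltnNge leq_addl.
  + by case=> _ E H; apply: IH E H.
Qed.

End Aux.

Section Main.
Variables (V : finType) (A : Type) (G : graph V A) (Q : V -> V -> Prop).

Lemma spread_prop : propagated G (spread G Q).
Proof.
split; [|split].
- move=> n m n1 n2 m1 m2 H Hn Hm S HS He HQ. exact: (proj1 HS) (H S HS He HQ) Hn Hm.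
- move=> n m b c H Hn Hm S HS He HQ. exact: (proj1 (proj2 HS)) (H S HS He HQ) Hn Hm.
- move=> n m n1 n2 m1 m2 H Hn Hm S HS He HQ. exact: (proj2 (proj2 HS)) (H S HS He HQ) Hn Hm.
Qed.

Lemma spread_equiv : equivalence_rel (spread G Q).
Proof.
split; [|split].
- move=> x S _ He _. exact: (proj1 He).
- move=> x y H S HS He HQ. exact: (proj1 (proj2 He)) (H S HS He HQ).
- move=> x y z H1 H2 S HS He HQ. exact: (proj2 (proj2 He)) (H1 S HS He HQ) (H2 S HS He HQ).
Qed.

Lemma spread_Q {x y} : Q x y -> spread G Q x y.
Proof. by move=> H S _ _ HQ; apply: HQ. Qed.

Definition link x y := x = y \/ exists r r' t, (Q r r' \/ Q r' r) /\
  Defs.path G r t x /\ Defs.path G r' t y.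

Inductive L : V -> V -> Prop :=
| L_refl x : L x x
| L_step x y z : link x y -> L y z -> L x z.
Arguments L_step {x y z}.

Lemma L_trans {x y z} : L x y -> L y z -> L x z.
Proof. move=> H1 H2; elim: H1 H2 => [a|a b c Hl _ IH] H //. exact: L_step Hl (IH H). Qed.

Lemma link_sym {x y} : link x y -> link y x.
Proof.
case=> [->|[r [r' [t [Hq [H1 H2]]]]]]; first by left.
right; exists r', r, t; split => //. by case: Hq; [right|left].
Qed.

Lemma L_sym x y : L x y -> L y x.
Proof.
elim => [a|a b c Hl _ IH]; first exact: L_refl.
apply: (L_trans IH). exact: L_step (link_sym Hl) (L_refl _).
Qed.

Variable R : V -> V -> Prop.
Hypothesis HR : sharing_equivalence G R.
Hypothesis HQR : forall x y, Q x y -> R x y.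

Lemma link_R {x y} : link x y -> R x y.
Proof.
have [_ [[_ [Hp _]] [Hrefl [Hsym _]]]] := HR.
case=> [->|[r [r' [t [Hq [H1 H2]]]]]]; first exact: Hrefl.
have HRR : R r r' by case: Hq => H; [exact: HQR | exact: Hsym _ _ (HQR _ _ H)].
exact: (same_trace Hp HRR H1 H2).
Qed.

Lemma L_R {x y} : L x y -> R x y.
Proof.
have [_ [_ [Hrefl [_ Htr]]]] := HR.
elim => [a|a b c Hl _ IH]; first exact: Hrefl.
exact: Htr (link_R Hl) IH.
Qed.

Lemma homog_R {x y} : R x y -> homogeneous_nodes G x y.
Proof. by have [_ [[Hh _] _]] := HR; apply: Hh. Qed.

Lemma L_prop : propagated G L.
Proof.
split; [|split].
- move=> n m n1 n2 m1 m2 H; elim: H n1 n2 => [a|a b c Hl _ IH] n1 n2 Ha Hc.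
  + rewrite Ha in Hc; case: Hc => -> _; exact: L_refl.
  + have := homog_R (link_R Hl). rewrite /homogeneous_nodes Ha.
    case Eb: (G b) => [b1 b2|x|x|x] // _.
    apply: L_step (IH _ _ Eb Hc).
    case: Hl => [E|[r [r' [t [Hq [H1 H2]]]]]].
    * subst; left; rewrite Ha in Eb; by case: Eb.
    * right; exists r, r', (DL :: t); split => //; split;
      [exact: path_appl H1 Ha | exact: path_appl H2 Eb].
- move=> n m n1 m1 H; elim: H n1 => [a|a b c Hl _ IH] n1 Ha Hc.
  + rewrite Ha in Hc; case: Hc => ->; exact: L_refl.
  + have := homog_R (link_R Hl). rewrite /homogeneous_nodes Ha.
    case Eb: (G b) => [b1 b2|x|x|x] // _.
    apply: L_step (IH _ Eb Hc).
    case: Hl => [E|[r [r' [t [Hq [H1 H2]]]]]].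
    * subst; left; rewrite Ha in Eb; by case: Eb.
    * right; exists r, r', (DD :: t); split => //; split;
      [exact: path_abs H1 Ha | exact: path_abs H2 Eb].
- move=> n m n1 n2 m1 m2 H; elim: H n1 n2 => [a|a b c Hl _ IH] n1 n2 Ha Hc.
  + rewrite Ha in Hc; case: Hc => _ ->; exact: L_refl.
  + have := homog_R (link_R Hl). rewrite /homogeneous_nodes Ha.
    case Eb: (G b) => [b1 b2|x|x|x] // _.
    apply: L_step (IH _ _ Eb Hc).
    case: Hl => [E|[r [r' [t [Hq [H1 H2]]]]]].
    * subst; left; rewrite Ha in Eb; by case: Eb.
    * right; exists r, r', (DR :: t); split => //; split;
      [exact: path_appr H1 Ha | exact: path_appr H2 Eb].
Qed.

Lemma spread_L x y : spread G Q x y -> L x y.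
Proof.
move=> H; apply: H.
- exact: L_prop.
- split; [exact: L_refl|split; [exact: L_sym|move=> ? ? ?; exact: L_trans]].
- move=> a b Hq. apply: L_step (L_refl _). right; exists a, b, nil.
  by split; [left|split; apply: path_nil].
Qed.

Hypothesis HG : lambda_graph G.
Hypothesis HQq : query G Q.

Lemma core r r' t x y l k : Q r r' -> Defs.path G r t x -> Defs.path G r' t y ->
  G x = BVar l -> G y = BVar k -> spread G Q l k.
Proof.
move=> Hq H1 H2 Hx Hy.
have [_ [Hac Hdom]] := HG.
have [Hr Hr'] := HQq _ _ Hq.
have [_ [[Hh [Hp Hb]] [Hrefl [Hsym Htr]]]] := HR.
have [t0 [t1 [Et Hl]]] := crosses_split (Hdom _ _ Hx r t Hr H1).
have [s0 [s1 [Es Hk]]] := crosses_split (Hdom _ _ Hy r' t Hr' H2).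
have Rxy : R x y := same_trace Hp (HQR _ _ Hq) H1 H2.
have Rlk : R l k := Hb _ _ _ _ Rxy Hx Hy.
have E : t0 ++ t1 = s0 ++ s1 by rewrite -Et -Es.
case: (leqP (size t1) (size s1)) => Hs.
- have [e Ee] := suffix_lem E Hs. subst s1. clear E Es Et Hs.
  case: e Hk => [|d e] /= Hk.
  + exact: (same_trace spread_prop (spread_Q Hq) Hl Hk).
  + exfalso. have [u [Hu1 Hu2]] := path_split (s := d :: e) (t := t1) Hk.
    have Rlu : R l u := same_trace Hp (HQR _ _ Hq) Hl Hu1.
    apply: (no_proper_loop Hac Hh Hp (e := d :: e)) Hu2 _ => //.
    exact: Htr (Hsym _ _ Rlu) Rlk.
- have [e Ee] := suffix_lem (esym E) (ltnW Hs). subst t1. clear E Es Et.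
  case: e Hl Hs => [|d e] Hl Hs; first by rewrite ltnn in Hs.
  exfalso. have [u [Hu1 Hu2]] := path_split Hl.
  have Ruk : R u k := same_trace Hp (HQR _ _ Hq) Hu1 Hk.
  apply: (no_proper_loop Hac Hh Hp (e := d :: e)) Hu2 _ => //.
  exact: Htr Ruk (Hsym _ _ Rlk).
Qed.

Lemma L_bvar x y : L x y -> forall l k, G x = BVar l -> G y = BVar k ->
  spread G Q l k.
Proof.
have [Er [Es Et]] := spread_equiv.
elim => [a|a b c Hl _ IH] l k Ha Hc.
- rewrite Ha in Hc; case: Hc => ->; exact: Er.
- have := homog_R (link_R Hl). rewrite /homogeneous_nodes Ha.
  case Eb: (G b) => [b1 b2|z|z|z] // _.
  apply: Et (IH _ _ Eb Hc).
  case: Hl => [E|[r [r' [t [[Hq|Hq] [H1 H2]]]]]].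
  + subst; rewrite Ha in Eb; case: Eb => ->; exact: Er.
  + exact: core Hq H1 H2 Ha Eb.
  + apply: Es; exact: core Hq H2 H1 Eb Ha.
Qed.

End Main.

Theorem mainTheorem16 (V : finType) (A : Type) (G : graph V A)
  (Q : V -> V -> Prop) :
  lambda_graph G -> query G Q ->
  (sharing_equivalence G (spread G Q) <->
   exists R : V -> V -> Prop,
     sharing_equivalence G R /\ (forall x y, Q x y -> R x y)).
Proof.
move=> HG HQ; split.
- move=> H; exists (spread G Q); split => //; exact: spread_Q.
- move=> [R [HR HQR]].
  have [Ho [[Hh [Hp Hb]] He]] := HR.
  have incl : forall x y, spread G Q x y -> R x y.
    by move=> x y H; apply: H.
  split; [|split; [split; [|split]|exact: spread_equiv]].
  + move=> n m a b Hn Hm H; exact: Ho Hn Hm (incl _ _ H).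
  + move=> n m H; exact: Hh (incl _ _ H).
  + exact: spread_prop.
  + move=> n m l k H Hn Hm.
    exact: (@L_bvar V A G Q R HR HQR HG HQ n m (@spread_L V A G Q R HR HQR n m H) l k Hn Hm).
Qed.
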